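(* Let $n\ge1$, $d\ge1$ and let $U\subseteq\mathbb R^d$ be a finite set with $|U|\ge3$ contained in the closed unit ball, with a fixed enumeration $U=\{v_1,\dots,v_{|U|}\}$; let $P(U)$ be its power set. Then there exist sets $\Psi_1,\dots,\Psi_n\subseteq\mathbb R^{2n}$, a number $0<\epsilon<\frac1n$, and maps $\phi:P(U)\times[n]\to\mathbb R^{2n}$ and $\alpha:\mathbb R^{2n}\to U$ such that: (i) $\|\phi(V,j)\|\le 1$ for all $V\subseteq U$, $j\in[n]$; (ii) for every $k\in[n]$ and $\psi\in\Psi_k$, $\|\psi\|\le1$ and $\|\alpha(\psi)\|\le1$; (iii) for every $k\in[n]$ and all $V_1,\dots,V_k\subseteq U$, the vector $\psi_k^*=\frac1n\sum_{i=1}^k\phi(V_i,i)$ lies in $\Psi_k$ and satisfies: for every $\psi\in\Psi_k$ with $\psi\ne\psi_k^*$, $\big\langle\psi_k^*,\frac1n\sum_{i=1}^k\phi(V_i,i)\big\rangle\ge\big\langle\psi,\frac1n\sum_{i=1}^k\phi(V_i,i)\big\rangle+\epsilon$; and if $\bigcap_{i=1}^kV_i\ne\emptyset$ then $\alpha(\psi_k^* )=v_m$ where $m=\min\{i: v_i\in\bigcap_{l=1}^kV_l\}$.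
   Context: $[N]=\{1,\dots,N\}$; norms are Euclidean. *)

(* Defs.v *)
From HB Require Import structures.
From mathcomp Require Import all_boot all_order all_algebra.
From mathcomp Require Import reals.
Set Implicit Arguments. Unset Strict Implicit. Unset Printing Implicit Defensive.
Import Order.TTheory GRing.Theory Num.Theory.
Local Open Scope ring_scope.

Definition dotv (R : realType) (m : nat) (x y : 'rV[R]_m) : R :=
  \sum_(i < m) x 0 i * y 0 i.

Definition normv (R : realType) (m : nat) (x : 'rV[R]_m) : R :=
  Num.sqrt (dotv x x).

(* Main.v *)
Require Import Defs.
From HB Require Import structures.
From mathcomp Require Import all_boot all_order all_algebra.
From mathcomp Require Import reals.
From mathcomp Require Import ring lra zify.
Set Implicit Arguments. Unset Strict Implicit. Unset Printing Implicit Defensive.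
Import Order.TTheory GRing.Theory Num.Theory.
Local Open Scope ring_scope.

Lemma pair_sum (R : realType) (n : nat) (f : nat -> R) :
  \sum_(i < 2 * n) f i = \sum_(j < n) (f j.*2 + f j.*2.+1).
Proof.
rewrite -(big_mkord xpredT f) -(big_mkord xpredT (fun j => f j.*2 + f j.*2.+1)) mul2n.
elim: n => [|n IH]; first by rewrite /index_iota /= !big_nil.
rewrite doubleS !big_nat_recr //= ?IH ?addrA //; try lia.

Qed.

Lemma ind_sum (R : realType) (n k : nat) :
  \sum_(j < n) (if (j < k)%N then 1 else 0 : R) = (minn n k)%:R.
Proof.
rewrite -(big_mkord xpredT (fun j => if (j < k)%N then 1 else 0 : R)).
elim: n => [|n IH]; first by rewrite /index_iota /= big_nil min0n.
rewrite big_nat_recr //= IH.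
case: (ltnP n k) => H.
  by rewrite (minn_idPl H) -natr1.
by rewrite addr0 (minn_idPr (leqW H)).
Qed.

Lemma eq_sum (R : realType) (n a : nat) :
  \sum_(j < n) (if (nat_of_ord j == a)%N then 1 else 0 : R) <= 1.
Proof.
rewrite -(big_mkord xpredT (fun j => if (j == a)%N then 1 else 0 : R)).
have : \sum_(0 <= j < n) (if (j == a)%N then 1 else 0 : R) = (a < n)%:R.
  elim: n => [|n IH]; first by rewrite /index_iota /= big_nil.
  rewrite big_nat_recr //= IH.
  case: (ltngtP a n) => H.
  - have -> : (a < n.+1)%N = true by lia.
    by rewrite addr0.
  - have -> : (a < n.+1)%N = false by lia.
    by rewrite addr0.
  - by rewrite H ltnS leqnn add0r.
by move=> ->; case: (a < n)%N; rewrite ?ler01.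
Qed.

Definition ct (R : realType) (t : R) : R := (1 - t ^+ 2) / (1 + t ^+ 2).
Definition st (R : realType) (t : R) : R := 2 * t / (1 + t ^+ 2).

Lemma den_pos (R : realType) (t : R) : 0 < 1 + t ^+ 2.
Proof. by rewrite ltr_pwDl // sqr_ge0. Qed.

Lemma circ (R : realType) (t : R) : ct t ^+ 2 + st t ^+ 2 = 1.
Proof.
rewrite /ct /st; have := den_pos t => h.
have h' : 1 + t ^+ 2 != 0 by rewrite gt_eqF.
field; exact: h'.
Qed.

Lemma gap (R : realType) (t u : R) : 0 <= t <= 1 -> 0 <= u <= 1 ->
  (t - u) ^+ 2 / 2 <= 1 - (ct t * ct u + st t * st u).
Proof.
move=> /andP[t0 t1] /andP[u0 u1].
have ht := den_pos t; have hu := den_pos u.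
have -> : 1 - (ct t * ct u + st t * st u) =
   2 * (t - u) ^+ 2 / ((1 + t ^+ 2) * (1 + u ^+ 2)).
  rewrite /ct /st; field.
  by rewrite !gt_eqF.
rewrite ler_pdivlMr ?mulr_gt0 //.
have ht2 : t ^+ 2 <= 1 by rewrite expr2; nra.
have hu2 : u ^+ 2 <= 1 by rewrite expr2; nra.
have hd : (1 + t ^+ 2) * (1 + u ^+ 2) <= 4.
  move: ht2 hu2; set a := t ^+ 2; set b := u ^+ 2 => ht2 hu2.
  have a0 : 0 <= a by rewrite sqr_ge0.
  have b0 : 0 <= b by rewrite sqr_ge0.
  nra.
have hs : 0 <= (t - u) ^+ 2 by rewrite sqr_ge0.
move: hd hs; set D := _ * _; set x := (t - u) ^+ 2 => hd hs.
nra.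
Qed.

Definition tW (R : realType) (N : nat) (W : {set 'I_N}) : R :=
  (enum_rank W : nat)%:R / (#|{set 'I_N}| : nat)%:R.

Lemma card_pos N : (0 < #|{set 'I_N}|)%N.
Proof. by apply/card_gt0P; exists set0. Qed.

Lemma tW_range (R : realType) N (W : {set 'I_N}) : 0 <= tW R W <= 1.
Proof.
rewrite /tW; have hM : (0 : R) < (#|{set 'I_N}| : nat)%:R by rewrite ltr0n card_pos.
rewrite divr_ge0 ?ler0n ?(ltW hM) //= ler_pdivrMr // mul1r ler_nat.
exact: ltnW (ltn_ord _).
Qed.

Lemma tW_sep (R : realType) N (W W' : {set 'I_N}) : W != W' ->
  ((#|{set 'I_N}| : nat)%:R ^+ 2)^-1 <= (tW R W - tW R W') ^+ 2.
Proof.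
move=> hne; rewrite /tW.
have hM : (0 : R) < (#|{set 'I_N}| : nat)%:R by rewrite ltr0n card_pos.
set M := (#|{set 'I_N}| : nat)%:R in hM *.
set a := (enum_rank W : nat); set b := (enum_rank W' : nat).
have hab : a != b.
  apply: contra hne => /eqP h; apply/eqP; apply: enum_rank_inj; exact: val_inj.
rewrite -mulrBl exprMn exprVn -[X in X <= _]mul1r ler_pM2r ?invr_gt0 ?exprn_gt0 //.
have : (1 : R) <= `|a%:R - b%:R|.
  case: (ltngtP a b) => h.
  - rewrite distrC -natrB ?(ltnW h) // normr_nat ler1n subn_gt0 //.
  - rewrite -natrB ?(ltnW h) // normr_nat ler1n subn_gt0 //.
  - by rewrite h eqxx in hab.
move: (a%:R - b%:R) => x h1.
rewrite -(@ger0_norm _ (x ^+ 2)) ?sqr_ge0 // normrX.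
move: h1; set y := `|x| => h1; nra.
Qed.

Lemma tW_inj (R : realType) N (W W' : {set 'I_N}) : tW R W = tW R W' -> W = W'.
Proof.
move=> h; apply/eqP; apply: contraT => hne.
have := tW_sep R hne; rewrite h subrr expr0n /=.
have hM : (0 : R) < (#|{set 'I_N}| : nat)%:R by rewrite ltr0n card_pos.
move=> h2; have : (0:R) < ((#|{set 'I_N}| : nat)%:R ^+ 2)^-1 by rewrite invr_gt0 exprn_gt0.
by rewrite ltNge h2.
Qed.

Definition gW (R : realType) N (W : {set 'I_N}) (b : bool) : R :=
  if b then st (tW R W) else ct (tW R W).

Definition phiF (R : realType) N n (W : {set 'I_N}) (j : nat) : 'rV[R]_(2 * n) :=
  \row_(i < 2 * n) (if (i./2 == j.-1)%N then gW R W (odd i) else 0).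

Definition FF (R : realType) N (k : nat) (V : nat -> {set 'I_N}) (l : nat) : R :=
  if (l./2 < k)%N then gW R (V (l./2).+1) (odd l) else 0.

Definition SS (R : realType) N n k (V : nat -> {set 'I_N}) : 'rV[R]_(2 * n) :=
  n%:R^-1 *: \sum_(1 <= i < k.+1) phiF R n (V i) i.

Lemma sum_single (R : realType) (x : nat -> R) a k :
  \sum_(1 <= i < k.+1) (if (a == i.-1)%N then x i else 0) =
  if (a < k)%N then x a.+1 else 0.
Proof.
elim: k => [|k IH]; first by rewrite big_geq.
rewrite big_nat_recr //= IH.
case: (ltngtP a k) => h.
- have -> : (a < k.+1)%N by lia.
  by rewrite addr0.
- have -> : (a < k.+1)%N = false by lia.
  by rewrite addr0.
- by rewrite h ltnSn add0r.
Qed.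

Lemma SS_entry (R : realType) N n k (V : nat -> {set 'I_N}) (i : 'I_(2 * n)) :
  SS R n k V 0 i = n%:R^-1 * FF R k V i.
Proof.
rewrite /SS !mxE summxE; congr (_ * _).
under eq_bigr do rewrite mxE.
by rewrite sum_single.
Qed.

Lemma half2 j : (j.*2)./2 = j. Proof. exact: doubleK. Qed.
Lemma half2S j : (j.*2.+1)./2 = j. Proof. exact: (half_bit_double j true). Qed.
Lemma odd2S j : odd (j.*2.+1). Proof. by rewrite /= odd_double. Qed.

Lemma dot_SS (R : realType) N n k (V V' : nat -> {set 'I_N}) :
  dotv (SS R n k V') (SS R n k V) =
  \sum_(j < n) (n%:R^-1 ^+ 2 * (if (j < k)%N then
     gW R (V' j.+1) false * gW R (V j.+1) false + gW R (V' j.+1) true * gW R (V j.+1) true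
     else 0)).
Proof.
rewrite /dotv.
under eq_bigr do rewrite !SS_entry.
rewrite (@pair_sum R n (fun l => n%:R^-1 * FF R k V' l * (n%:R^-1 * FF R k V l))).
apply: eq_bigr => j _.
rewrite /FF half2 half2S odd2S odd_double.
case: (j < k)%N; ring.
Qed.

Lemma normv_le1 (R : realType) m (x : 'rV[R]_m) : dotv x x <= 1 -> normv x <= 1.
Proof. by move=> h; rewrite /normv -(@sqrtr1 R); apply: ler_wsqrtr. Qed.

Lemma gW_circ (R : realType) N (W : {set 'I_N}) :
  gW R W false * gW R W false + gW R W true * gW R W true = 1.
Proof. by rewrite /gW -!expr2 circ. Qed.

Lemma phi_norm (R : realType) N n (W : {set 'I_N}) j : normv (phiF R n W j) <= 1.
Proof.
apply: normv_le1; rewrite /dotv.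
under eq_bigr do rewrite !mxE.
rewrite (@pair_sum R n (fun l => (if (l./2 == j.-1)%N then gW R W (odd l) else 0) *
   (if (l./2 == j.-1)%N then gW R W (odd l) else 0))).
rewrite (eq_bigr (fun j' : 'I_n => if (nat_of_ord j' == j.-1)%N then 1 else 0 : R)).
  exact: eq_sum.
move=> j' _; rewrite half2 half2S odd2S odd_double.
by case: (_ == _); rewrite ?gW_circ // !mul0r addr0.
Qed.

Lemma SS_norm (R : realType) N n k (V : nat -> {set 'I_N}) : (1 <= n)%N -> (k <= n)%N ->
  normv (SS R n k V) <= 1.
Proof.
move=> n1 kn; apply: normv_le1; rewrite dot_SS.
under eq_bigr do rewrite gW_circ.
rewrite -mulr_sumr (ind_sum R n k) (minn_idPr kn).
have hn : (1 : R) <= n%:R by rewrite ler1n.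
have hk : (k%:R : R) <= n%:R by rewrite ler_nat.
rewrite expr2 -mulrA ler_pdivrMl ?ltr0n // mulr1 ler_pdivrMl ?ltr0n //.
nra.
Qed.

Definition epsF (R : realType) N n : R :=
  n%:R^-1 ^+ 2 * ((#|{set 'I_N}| : nat)%:R ^+ 2)^-1 / 2.

Lemma SS_sep (R : realType) N n k (V V' : nat -> {set 'I_N}) : (k <= n)%N ->
  SS R n k V' <> SS R n k V ->
  dotv (SS R n k V') (SS R n k V) + epsF R N n <= dotv (SS R n k V) (SS R n k V).
Proof.
move=> kn Hne.
have [j [jk hj]] : exists j, (j < k)%N /\ V' j.+1 != V j.+1.
  case: (boolP [exists j : 'I_k, V' j.+1 != V j.+1]) => [/existsP[j hj] | /existsPn H].
    by exists j.
  exfalso; apply: Hne; rewrite /SS; congr (_ *: _); apply: eq_big_nat => i /andP[i1 ik].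
  have ik' : (i.-1 < k)%N by lia.
  have := H (Ordinal ik'); rewrite negbK /= prednK // => /eqP ->; by [].
rewrite !dot_SS -lerBrDl -sumrB.
have jn : (j < n)%N by lia.
rewrite (eq_bigr (fun i : 'I_n => n%:R^-1 ^+ 2 * (if (i < k)%N then 1 -
   (gW R (V' i.+1) false * gW R (V i.+1) false + gW R (V' i.+1) true * gW R (V i.+1) true)
   else 0))); last first.
  by move=> i _; rewrite gW_circ; case: (i < k)%N; rewrite ?mulr0 ?subr0 // mulrBr.
rewrite (bigD1 (Ordinal jn)) //=.
have hT : forall i : 'I_n, 0 <= n%:R^-1 ^+ 2 * (if (i < k)%N then 1 -
   (gW R (V' i.+1) false * gW R (V i.+1) false + gW R (V' i.+1) true * gW R (V i.+1) true)
   else 0).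
  move=> i; case: (i < k)%N; last by rewrite mulr0.
  rewrite mulr_ge0 ?sqr_ge0 //.
  apply: le_trans (gap (tW_range R (V' i.+1)) (tW_range R (V i.+1))).
  by rewrite divr_ge0 ?sqr_ge0.
rewrite -[epsF _ _ _]addr0 lerD ?sumr_ge0 //.
rewrite jk /epsF -mulrA ler_pM2l ?exprn_gt0 ?invr_gt0 ?ltr0n; last by lia.
apply: le_trans (gap (tW_range R (V' j.+1)) (tW_range R (V j.+1))).
rewrite ler_pM2r ?invr_gt0 //.
exact: tW_sep.
by [].
Qed.

Lemma epsF_pos (R : realType) N n : (1 <= n)%N -> 0 < epsF R N n.
Proof.
move=> n1; rewrite /epsF !mulr_gt0 ?exprn_gt0 ?invr_gt0 ?ltr0n ?card_pos //.
by rewrite exprn_gt0 // ltr0n card_pos.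
Qed.

Lemma epsF_lt (R : realType) N n : (1 <= n)%N -> epsF R N n < 1 / n%:R.
Proof.
move=> n1; rewrite /epsF mul1r.
have hM : (1 : R) <= (#|{set 'I_N}| : nat)%:R by rewrite ler1n card_pos.
have hn : (1 : R) <= n%:R by rewrite ler1n.
have ha : 0 < n%:R^-1 :> R by rewrite invr_gt0 ltr0n.
have ha1 : n%:R^-1 <= 1 :> R by rewrite invf_le1 ?ltr0n.
have hb : 0 < ((#|{set 'I_N}| : nat)%:R ^+ 2)^-1 :> R by rewrite invr_gt0 exprn_gt0 // ltr0n card_pos.
have hb1 : ((#|{set 'I_N}| : nat)%:R ^+ 2)^-1 <= 1 :> R.
  by rewrite invf_le1 ?exprn_gt0 ?ltr0n ?card_pos // exprn_ege1.
move: ha ha1 hb hb1; set a := n%:R^-1; set b := (_ ^+ 2)^-1 => ha ha1 hb hb1.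
rewrite expr2; nra.
Qed.

Definition coord (R : realType) m (psi : 'rV[R]_m) (l : nat) : R :=
  \sum_(i < m | nat_of_ord i == l) psi 0 i.

Lemma coordE (R : realType) m (psi : 'rV[R]_m) (l : nat) (hl : (l < m)%N) :
  coord psi l = psi 0 (Ordinal hl).
Proof. by rewrite /coord (big_pred1 (Ordinal hl)) // => i; rewrite /= -val_eqE. Qed.

Definition dec (R : realType) N n (psi : 'rV[R]_(2 * n)) (j : nat) : option {set 'I_N} :=
  [pick W : {set 'I_N} | (coord psi j.*2 == n%:R^-1 * gW R W false) &&
                         (coord psi j.*2.+1 == n%:R^-1 * gW R W true)].

Lemma gW_inj (R : realType) N (W W' : {set 'I_N}) :
  gW R W false = gW R W' false -> gW R W true = gW R W' true -> W = W'.
Proof.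
move=> h1 h2; apply: (@tW_inj R); apply/eqP; rewrite -subr_eq0 -sqrf_eq0.
have := gap (tW_range R W) (tW_range R W').
have := gW_circ R W; rewrite /gW in h1 h2 * => c.
rewrite -h1 -h2 c subrr => h; rewrite eq_le sqr_ge0 andbT.
by rewrite -(@ler_pM2r _ (2^-1)) ?invr_gt0 // mul0r.
Qed.

Lemma dec_SS (R : realType) N n k (V : nat -> {set 'I_N}) j : (1 <= n)%N -> (j < n)%N ->
  @dec R N n (SS R n k V) j = if (j < k)%N then Some (V j.+1) else None.
Proof.
move=> n1 jn.
have h1 : (j.*2 < 2 * n)%N by lia.
have h2 : (j.*2.+1 < 2 * n)%N by lia.
have hn : n%:R^-1 != 0 :> R by rewrite invr_eq0 pnatr_eq0 -lt0n.
rewrite /dec; case: pickP => [W /andP[/eqP e1 /eqP e2] | H].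
  rewrite (coordE _ h1) (coordE _ h2) !SS_entry /= /FF half2 half2S odd2S odd_double in e1 e2.
  move: e1 e2; case: (j < k)%N => e1 e2.
    by congr Some; apply: gW_inj; apply: (mulfI hn).
  exfalso; move: e1 e2; rewrite mulr0 => /esym/eqP; rewrite mulf_eq0 (negbTE hn) /= => /eqP c1.
  move/esym/eqP; rewrite mulf_eq0 (negbTE hn) /= => /eqP c2.
  by have := gW_circ R W; rewrite /gW in c1 c2 *; rewrite c1 c2 mulr0 addr0 => /eqP; rewrite eq_sym oner_eq0.
case jk: (j < k)%N => //.
have := H (V j.+1); rewrite (coordE _ h1) (coordE _ h2) !SS_entry /= /FF half2 half2S odd2S odd_double jk.
by rewrite !eqxx.
Qed.

Definition Dset (R : realType) N n (psi : 'rV[R]_(2 * n)) : {set 'I_N} :=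
  \bigcap_(j < n) (if @dec R N n psi j is Some W then W else setT).

Lemma Dset_SS (R : realType) N n k (V : nat -> {set 'I_N}) : (1 <= n)%N -> (k <= n)%N ->
  @Dset R N n (SS R n k V) = \bigcap_(1 <= l < k.+1) V l.
Proof.
move=> n1 kn; rewrite /Dset.
rewrite (eq_bigr (fun j : 'I_n => if (j < k)%N then V j.+1 else setT)); last first.
  by move=> j _; rewrite dec_SS //; case: (j < k)%N.
rewrite -(big_mkord xpredT (fun j => if (j < k)%N then V j.+1 else setT)).
rewrite (@big_cat_nat _ _ _ k 0 n _ _ (leq0n k) kn) /=.
rewrite [X in _ :&: X]big_nat_cond [X in _ :&: X]big1 ?setIT; last first.
  by move=> i /andP[/andP[ki _] _]; rewrite ltnNge ki.
rewrite big_add1 /=.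
by apply: eq_big_nat => i /andP[_ ik]; rewrite ik.
Qed.

Definition alphaF (R : realType) N n (i0 : 'I_N) (psi : 'rV[R]_(2 * n)) : 'I_N :=
  if [pick i in @Dset R N n psi | [forall j in @Dset R N n psi, (i <= j)%N]] is Some i then i else i0.

Lemma alphaF_min (R : realType) N n (i0 : 'I_N) (psi : 'rV[R]_(2 * n)) (m : 'I_N) :
  m \in @Dset R N n psi -> (forall i, i \in @Dset R N n psi -> (m <= i)%N) -> alphaF i0 psi = m.
Proof.
move=> hm hmin; rewrite /alphaF; case: pickP => [i /andP[hi /forall_inP hf] | H].
  by apply: val_inj; apply/eqP; rewrite eqn_leq hmin // hf.
exfalso; have := H m; rewrite hm /=; move/negP; apply; apply/forall_inP => j hj.
exact: hmin.
Qed.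

(* U = {v_0, ..., v_(N-1)} given by an injective enumeration v : 'I_N -> R^d;
   subsets of U are encoded by subsets of indices {set 'I_N};
   alpha returns the index of an element of U; [n] = {1..n}. *)
Theorem mainTheorem5 (R : realType) (n d N : nat) (v : 'I_N -> 'rV[R]_d) :
  (1 <= n)%N -> (1 <= d)%N -> (3 <= N)%N -> injective v ->
  (forall i, normv (v i) <= 1) ->
  exists (Psi : nat -> 'rV[R]_(2 * n) -> Prop) (eps : R)
         (phi : {set 'I_N} -> nat -> 'rV[R]_(2 * n))
         (alpha : 'rV[R]_(2 * n) -> 'I_N),
    [/\ 0 < eps, eps < 1 / n%:R,
     (forall (V : {set 'I_N}) (j : nat), (1 <= j <= n)%N -> normv (phi V j) <= 1),
     (forall (k : nat) (psi : 'rV[R]_(2 * n)), (1 <= k <= n)%N -> Psi k psi ->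
        normv psi <= 1 /\ normv (v (alpha psi)) <= 1) &
     (forall (k : nat) (V : nat -> {set 'I_N}), (1 <= k <= n)%N ->
        let S := n%:R^-1 *: \sum_(1 <= i < k.+1) phi (V i) i in
        let psistar := S in
        [/\ Psi k psistar,
         (forall psi, Psi k psi -> psi <> psistar ->
            dotv psistar S >= dotv psi S + eps) &
         (forall m : 'I_N, m \in \bigcap_(1 <= l < k.+1) V l ->
            (forall i : 'I_N, i \in \bigcap_(1 <= l < k.+1) V l -> (m <= i)%N) ->
            v (alpha psistar) = v m)])].
Proof.
move=> n1 d1 N3 vinj vnorm.
have i0 : 'I_N := Ordinal (leq_trans (isT : (0 < 3)%N) N3).
exists (fun k psi => exists V' : nat -> {set 'I_N}, psi = SS R n k V'), (epsF R N n),
  (fun W j => phiF R n W j), (alphaF i0).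
split.
- exact: epsF_pos.
- exact: epsF_lt.
- by move=> V j _; exact: phi_norm.
- move=> k psi /andP[_ kn] [V' ->]; split; [exact: SS_norm | exact: vnorm].
- move=> k V /andP[k1 kn] /=; split.
  + by exists V.
  + by move=> psi [V' ->] hne; exact: SS_sep.
  + move=> m hm hmin; congr v; apply: alphaF_min; rewrite Dset_SS //.
Qed.
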